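(* Let $A$ be a Noetherian integral domain with fraction field $K$, $M$ a finitely generated torsion-free $A$-module, $V=K\otimes_A M$ with $\dim_K V=n\ge 2$. Let $E(M\setminus\{0\})$ be the simplicial complex of all nonempty finite subsets of $M\setminus\{0\}$ and $E^*(M)$ its subcomplex of subsets of rank $<n$. Let $C_p(E(M\setminus\{0\}))$ be the free abelian group on ordered tuples $(v_0,\dots,v_p)$ of elements of $M\setminus\{0\}$ (ordered simplicial chains, with the usual alternating-sum boundary), $C_p(E^*(M))$ the subcomplex spanned by tuples of rank $<n$, and $\bar C_*=C_*(E(M\setminus\{0\}))/C_*(E^*(M))$. Then $\bar C_p=0$ for $p<n-1$, so every element of $\bar C_{n-1}$ is a cycle; composing the resulting map $\bar C_{n-1}\to H_{n-1}(\bar C_* )$ with the connecting homomorphism $H_{n-1}(\bar C_* )\to H_{n-2}(E^*(M))$, the inverse of the canonical subdivision isomorphism $H_{n-2}(\operatorname{sd}E^*(M))\xrightarrow{\sim}H_{n-2}(E^*(M))$, and the map $H_{n-2}(\operatorname{sd}E^*(M))\to H_{n-2}(T(V))=\operatorname{St}(V)$ induced by the simplicial map $\operatorname{sd}E^*(M)\to T(V)$ sending a vertex $Y$ of $\operatorname{sd}E^*(M)$ (a simplex of $E^*(M)$) to the $K$-span of $Y$, one obtains a homomorphism $\operatorname{ar}:\bar C_{n-1}\to \operatorname{St}(V)$ (with image in $\widetilde{\operatorname{St}}(V)$). Then for every $n$-tuple $Q=(v_0,\dots,v_{n-1})$ of elements of $M\setminus\{0\}$ spanning $V$, $\operatorname{ar}(Q)$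 equals the universal modular symbol $[v_0,\dots,v_{n-1}]$.
   Context: The rank of a subset of $M$ is the $K$-dimension of its span in $V$. $T(V)$ is the Tits building of $V$: vertices are nonzero proper subspaces of $V$, simplices are flags (nonempty chains under inclusion) of such subspaces; $\operatorname{St}(V)=H_{n-2}(T(V))$ is the Steinberg module, and $\widetilde{\operatorname{St}}(V)=\operatorname{St}(V)$ if $n>2$, while for $n=2$ it is the kernel of the augmentation $\operatorname{St}(V)=\mathbf{Z}[\text{lines of }V]\to\mathbf{Z}$ sending each line to $1$. For a simplicial complex $\Gamma$, $\operatorname{sd}\Gamma$ is its barycentric subdivision: vertices are the simplices of $\Gamma$, simplices are nonempty chains of simplices under inclusion; the subdivision isomorphism $H_*(\operatorname{sd}\Gamma)\cong H_*(\Gamma)$ is the canonical one, natural in $\Gamma$. Universal modular symbol: let $\Sigma_n$ be the simplicial complex whose vertices are the nonempty proper subsets of $\{0,\dots,n-1\}$ and whose simplices are chains of such subsets (the boundary of the barycentric subdivision of the simplex on $\{0,\dots,n-1\}$). Let $\zeta\in H_{n-2}(\Sigma_n)$ be the fundamental class given by the canonical orientation: the image under the connecting map of the class in $H_{n-1}$ of the subdivided simplex relative to its boundary corresponding to the oriented simplex $(0,1,\dots,n-1)$; for $n=2$ this is $\zeta=[\{1\}]-[\{0\}]$. For nonzero $v_0,\dots,v_{n-1}\in V$, let $\phi_Q:\Sigma_n\to T(V)$ send a vertex $I$ to the span of $\{v_i:i\in I\}$ (a simplicial map when the $v_i$ span $V$), and $[v_0,\dots,v_{n-1}]:=(\phi_Q)_*\zeta\in\operatorname{St}(V)$.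 *)

(* Defs.v *)
From HB Require Import structures.
From mathcomp Require Import all_boot all_order all_algebra all_field.
From mathcomp Require Import finmap.
Set Implicit Arguments. Unset Strict Implicit. Unset Printing Implicit Defensive.
Import Order.TTheory GRing.Theory Num.Theory.
Local Open Scope ring_scope.

Definition is_ideal (A : idomainType) (I : A -> Prop) : Prop :=
  I 0 /\ (forall x y, I x -> I y -> I (x - y)) /\ (forall a x, I x -> I (a * x)).

Definition noetherian (A : idomainType) : Prop :=
  forall I : A -> Prop, is_ideal I ->
    exists s : seq A, forall x, I x <->
      exists c : 'I_(size s) -> A, x = \sum_(i < size s) c i * s`_i.

Definition fin_gen (A : idomainType) (M : lmodType A) : Prop :=
  exists s : seq M, forall m : M,
    exists c : 'I_(size s) -> A, m = \sum_(i < size s) c i *: s`_i.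

Definition torsion_free (A : idomainType) (M : lmodType A) : Prop :=
  forall (a : A) (m : M), a *: m = 0 -> a = 0 \/ m = 0.

(* (V, iota) is K (x)_A M, K = Frac A, presented as the localisation of M at
   A \ {0}: iota is A-linear, every vector is a K-multiple of some iota m, and
   the kernel of iota is the torsion of M.  This characterises K (x)_A M up
   to unique isomorphism compatible with m |-> 1 (x) m. *)
Definition is_frac_tensor (A : idomainType) (M : lmodType A)
    (V : vectType {fraction A}) (iota : M -> V) : Prop :=
  [/\ forall m m', iota (m + m') = iota m + iota m',
      forall (a : A) m, iota (a *: m) = FracField.tofrac a *: iota m,
      forall x : V, exists (k : {fraction A}) (m : M), x = k *: iota m
    & forall m, iota m = 0 <-> exists a : A, a != 0 /\ a *: m = 0].

(* A chain on vertex type T is a formal Z-linear combination of tuples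
   (ordered simplices), represented by a list of (coefficient, tuple);
   two lists represent the same chain iff all coefficients agree. *)
Definition chain (T : eqType) := seq (int * seq T).

Definition coef (T : eqType) (c : chain T) (t : seq T) : int :=
  \sum_(x <- c | x.2 == t) x.1.

Definition chain_eq (T : eqType) (c d : chain T) : Prop :=
  forall t, coef c t = coef d t.

Definition chain_opp (T : eqType) (c : chain T) : chain T :=
  [seq (- x.1, x.2) | x <- c].

Definition chain_sub (T : eqType) (c d : chain T) : chain T :=
  c ++ chain_opp d.

Definition face (T : eqType) (i : nat) (t : seq T) : seq T :=
  take i t ++ drop i.+1 t.

Definition bd (T : eqType) (c : chain T) : chain T :=
  flatten [seq [seq ((-1) ^+ i * x.1, face i x.2) | i <- iota 0 (size x.2)]
          | x <- c].

Definition push (T U : eqType) (f : T -> U) (c : chain T) : chain U :=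
  [seq (x.1, map f x.2) | x <- c].

(* c is a p-chain of the (ordered chain complex of the) simplicial complex
   whose simplices are the vertex sets of the tuples satisfying S *)
Definition in_cx (T : eqType) (S : pred (seq T)) (p : nat) (c : chain T) :=
  forall t, coef c t != 0 -> size t = p.+1 /\ S t.

Definition is_cycle (T : eqType) (c : chain T) : Prop := chain_eq (bd c) [::].

Definition is_boundary (T : eqType) (S : pred (seq T)) (p : nat) (c : chain T) :=
  exists d, in_cx S p.+1 d /\ chain_eq (bd d) c.

Definition homologous (T : eqType) (S : pred (seq T)) (p : nat) (c d : chain T) :=
  is_boundary S p (chain_sub c d).

Definition is_flag (T : Type) (le : rel T) (s : seq T) : bool :=
  all (fun x => all (fun y => le x y || le y x) s) s.

Section Complexes.
Variables (A : idomainType) (M : lmodType A) (V : vectType {fraction A}).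
Variables (iota : M -> V) (n : nat).

Definition rank (s : seq M) : nat := \dim <<map iota s>>%VS.

Definition E_cx : pred (seq M) := fun t => all (fun m => m != 0) t.
Definition Estar_cx : pred (seq M) :=
  fun t => all (fun m => m != 0) t && (rank t < n)%N.

Definition Estar_simplex (Y : {fset M}) : bool :=
  (Y != fset0) && Estar_cx (enum_fset Y).
Definition sdEstar_cx : pred (seq {fset M}) :=
  fun s => all Estar_simplex s && is_flag (@fsubset M) s.

Definition tits_vertex (U : {vspace V}) : bool := (U != 0%VS) && (U != fullv).
Definition tits_cx : pred (seq {vspace V}) :=
  fun s => all tits_vertex s && is_flag (fun U W => (U <= W)%VS) s.

Definition spanY (Y : {fset M}) : {vspace V} := <<map iota (enum_fset Y)>>%VS.

(* simplicial approximation sd E* -> E* of the identity: a simplex Y goes to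
   one of its vertices; it induces the canonical subdivision isomorphism *)
Definition pick_vertex (Y : {fset M}) : M := head 0 (enum_fset Y).

(* z represents the preimage under the subdivision isomorphism of the class
   of the boundary of Q, i.e. of the image of Q under the connecting map *)
Definition ar_rep (Q : chain M) (z : chain {fset M}) : Prop :=
  [/\ in_cx sdEstar_cx n.-2 z, is_cycle z &
      homologous Estar_cx n.-2 (push pick_vertex z) (bd Q)].

End Complexes.

(* Delta_n: the full simplex on the vertices 0,...,n-1 (here as naturals
   < n), its boundary complex, sd Delta_n and Sigma_n = sd (boundary). *)
Definition Delta_cx (n : nat) : pred (seq nat) := fun t => all (fun i => i < n)%N t.
Definition bDelta_cx (n : nat) : pred (seq nat) :=
  fun t => all (fun i => i < n)%N t && ~~ all (fun i => i \in t) (iota 0 n).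
Definition sdDelta_cx (n : nat) : pred (seq {set 'I_n}) :=
  fun s => all (fun I => I != set0) s && is_flag (fun I J : {set 'I_n} => I \subset J) s.
Definition Sigma_cx (n : nat) : pred (seq {set 'I_n}) :=
  fun s => all (fun I => (I != set0) && (I != [set: 'I_n])) s
           && is_flag (fun I J : {set 'I_n} => I \subset J) s.

(* simplicial approximation sd Delta_n -> Delta_n of the identity:
   a nonempty subset goes to one of its elements *)
Definition pick_idx (n : nat) (I : {set 'I_n}) : nat :=
  head 0%N [seq val i | i in I].

Definition simplex_chain (n : nat) : chain nat := [:: (1%:Z, iota 0 n)].

(* w is a relative (n-1)-cycle of (sd Delta_n, Sigma_n) whose relative class
   corresponds under the subdivision isomorphism to the class of the oriented
   simplex (0,1,...,n-1) in H_{n-1}(Delta_n, boundary); the connecting map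
   sends it to the class of bd w, which is thus the fundamental class zeta
   in H_{n-2}(Sigma_n). *)
Definition zeta_rep (n : nat) (w : chain {set 'I_n}) : Prop :=
  [/\ in_cx (@sdDelta_cx n) n.-1 w, in_cx (@Sigma_cx n) n.-2 (bd w) &
      exists a b, [/\ in_cx (bDelta_cx n) n.-1 a, in_cx (Delta_cx n) n b &
        chain_eq (chain_sub (push (@pick_idx n) w) (simplex_chain n))
                 (a ++ bd b)]].

Definition phiQ (A : idomainType) (M : lmodType A) (V : vectType {fraction A})
    (iota : M -> V) (n : nat) (v : 'I_n -> M) (I : {set 'I_n}) : {vspace V} :=
  <<[seq iota (v i) | i in I]>>%VS.

(* Main.v *)
Require Import Defs.
From HB Require Import structures.
From mathcomp Require Import all_boot all_order all_algebra all_field.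
From mathcomp Require Import finmap.
From mathcomp Require Import ring zify.
Set Implicit Arguments. Unset Strict Implicit. Unset Printing Implicit Defensive.
Import GRing.Theory.
Local Open Scope ring_scope.

Section Gen.
Variable T : eqType.
Implicit Types (c d : chain T) (g : seq T -> int) (s t : seq T).

Definition pairing c g : int := \sum_(x <- c) x.1 * g x.2.

Lemma pairing_nil g : pairing [::] g = 0.
Proof. by rewrite /pairing big_nil. Qed.

Lemma pairing_cons x c g : pairing (x :: c) g = x.1 * g x.2 + pairing c g.
Proof. by rewrite /pairing big_cons. Qed.

Lemma pairing_cat c d g : pairing (c ++ d) g = pairing c g + pairing d g.
Proof. by rewrite /pairing big_cat. Qed.

Lemma pairing_opp c g : pairing (chain_opp c) g = - pairing c g.
Proof.
elim: c => [|x c IH]; first by rewrite !pairing_nil oppr0.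
by rewrite /= !pairing_cons IH /= opprD mulNr.
Qed.

Lemma pairing_sub c d g : pairing (chain_sub c d) g = pairing c g - pairing d g.
Proof. by rewrite /chain_sub pairing_cat pairing_opp. Qed.

Lemma pairing_ext c g1 g2 : (forall s, g1 s = g2 s) -> pairing c g1 = pairing c g2.
Proof. by move=> H; apply: eq_bigr => x _; rewrite H. Qed.

Lemma pairing_ext_in c g1 g2 : (forall x, x \in c -> g1 x.2 = g2 x.2) ->
  pairing c g1 = pairing c g2.
Proof. by move=> H; rewrite /pairing big_seq_cond [RHS]big_seq_cond; apply: eq_bigr => x /andP[/H -> _]. Qed.

Lemma pairingB c g1 g2 : pairing c (fun s => g1 s - g2 s) = pairing c g1 - pairing c g2.
Proof. by rewrite /pairing -sumrB; apply: eq_bigr => x _; rewrite mulrBr. Qed.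

Lemma pairingD c g1 g2 : pairing c (fun s => g1 s + g2 s) = pairing c g1 + pairing c g2.
Proof. by rewrite /pairing -big_split; apply: eq_bigr => x _; rewrite mulrDr. Qed.

Lemma pairing0 c : pairing c (fun _ => 0) = 0.
Proof. by rewrite /pairing big1 // => x _; rewrite mulr0. Qed.

Lemma coef_nil t : coef [::] t = 0.
Proof. by rewrite /coef big_nil. Qed.

Lemma coef_cons x c t : coef (x :: c) t = (if x.2 == t then x.1 else 0) + coef c t.
Proof. by rewrite /coef big_cons; case: ifP => _ //; rewrite add0r. Qed.

Lemma pairing_support c g (U : seq (seq T)) : uniq U -> {subset map snd c <= U} ->
  pairing c g = \sum_(t <- U) coef c t * g t.
Proof.
move=> uU; elim: c => [|x c IH] sub.
  by rewrite pairing_nil big1 // => t _; rewrite coef_nil mul0r.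
rewrite pairing_cons IH; last by move=> y yc; apply: sub; rewrite inE yc orbT.
have xU : x.2 \in U by apply: sub; rewrite inE eqxx.
under [RHS]eq_bigr => t _ do rewrite coef_cons mulrDl.
rewrite big_split /=; congr (_ + _).
rewrite (bigD1_seq x.2) //= eqxx big1 ?addr0 // => t /negbTE; rewrite eq_sym => ->.
by rewrite mul0r.
Qed.

Lemma coefE c t : coef c t = pairing c (fun s => (s == t)%:R).
Proof.
rewrite /coef /pairing big_mkcond; apply: eq_bigr => x _.
by case: (x.2 == t); rewrite ?mulr1 ?mulr0.
Qed.

Lemma chain_eqP c d : chain_eq c d <-> (forall g, pairing c g = pairing d g).
Proof.
split; last by move=> H t; rewrite !coefE H.
move=> H g; set U := undup (map snd (c ++ d)).
have uU : uniq U by apply: undup_uniq.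
rewrite (pairing_support g uU) ?(pairing_support g uU).
- by apply: eq_bigr => t _; rewrite H.
- by move=> y yd; rewrite mem_undup map_cat mem_cat yd orbT.
- by move=> y yc; rewrite mem_undup map_cat mem_cat yc.
Qed.

Lemma face0 x s : face 0 (x :: s) = s.
Proof. by rewrite /face /= drop0. Qed.

Lemma faceS i x s : face i.+1 (x :: s) = x :: face i s.
Proof. by []. Qed.

Lemma size_face i s : (i < size s)%N -> size (face i s) = (size s).-1.
Proof.
elim: s i => [|x s IH] [|i] // H; first by rewrite face0.
rewrite ltnS in H; rewrite faceS /= IH // prednK //; exact: leq_ltn_trans (leq0n i) H.
Qed.

Lemma mem_face i s y : y \in face i s -> y \in s.
Proof. by rewrite /face mem_cat => /orP[/mem_take|/mem_drop]. Qed.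

Definition bdg g s : int := \sum_(i <- iota 0 (size s)) (-1) ^+ i * g (face i s).

Lemma bdg_nil g : bdg g [::] = 0.
Proof. by rewrite /bdg big_nil. Qed.

Lemma bdg_cons g x s : bdg g (x :: s) = g s - bdg (fun u => g (x :: u)) s.
Proof.
rewrite /bdg /= big_cons expr0 mul1r face0; congr (_ + _).
rewrite -[1%N]/(1 + 0)%N iotaDl big_map -sumrN; apply: eq_bigr => i _.
by rewrite add1n faceS exprS mulN1r mulNr.
Qed.

Lemma bdg_ext g1 g2 s : (forall u, g1 u = g2 u) -> bdg g1 s = bdg g2 s.
Proof. by move=> H; apply: eq_bigr => i _; rewrite H. Qed.

Lemma bdgB g1 g2 s : bdg (fun u => g1 u - g2 u) s = bdg g1 s - bdg g2 s.
Proof. by rewrite /bdg -sumrB; apply: eq_bigr => i _; rewrite mulrBr. Qed.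

Lemma bdgbdg g s : bdg (bdg g) s = 0.
Proof.
elim: s g => [|x s IH] g; first by rewrite bdg_nil.
rewrite bdg_cons (bdg_ext _ (fun u => bdg_cons g x u)) bdgB.
by rewrite IH subr0 subrr.
Qed.

Lemma pairing_bd c g : pairing (bd c) g = pairing c (bdg g).
Proof.
elim: c => [|x c IH]; first by rewrite /= !pairing_nil.
rewrite /= pairing_cat IH pairing_cons; congr (_ + _).
rewrite /pairing big_map /bdg mulr_sumr; apply: eq_bigr => i _ /=.
by rewrite mulrCA mulrA.
Qed.

Lemma face_map (U : eqType) (f : T -> U) i s : face i (map f s) = map f (face i s).
Proof. by rewrite /face map_cat map_take map_drop. Qed.

End Gen.

Section Lin.
Variables T U : eqType.

Definition scl (k : int) (d : chain U) : chain U := [seq (y.1 * k, y.2) | y <- d].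
Definition lin (F : seq T -> chain U) (c : chain T) : chain U :=
  flatten [seq scl x.1 (F x.2) | x <- c].

Lemma pairing_scl k d g : pairing (scl k d) g = k * pairing d g.
Proof.
rewrite /pairing big_map mulr_sumr; apply: eq_bigr => y _ /=; ring.
Qed.

Lemma pairing_lin F c g : pairing (lin F c) g = pairing c (fun s => pairing (F s) g).
Proof.
elim: c => [|x c IH]; first by rewrite /= !pairing_nil.
by rewrite /lin /= pairing_cat pairing_scl pairing_cons -IH.
Qed.

Lemma pairing_push (f : T -> U) c g : pairing (push f c) g = pairing c (fun s => g (map f s)).
Proof. by rewrite /pairing big_map. Qed.

Lemma bdg_map (f : T -> U) g s : bdg g (map f s) = bdg (fun u => g (map f u)) s.
Proof. by rewrite /bdg size_map; apply: eq_bigr => i _; rewrite face_map. Qed.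

Lemma all_lin (P : pred (seq U)) F c :
  (forall x, x \in c -> all (fun y => P y.2) (F x.2)) -> all (fun y => P y.2) (lin F c).
Proof.
elim: c => [|x c IH] H //=; rewrite all_cat; apply/andP; split.
  by rewrite all_map; apply: sub_all (H x (mem_head _ _)) => y.
by apply: IH => y yc; apply: H; rewrite inE yc orbT.
Qed.

End Lin.

Definition cone (T : eqType) (y : T) (c : chain T) : chain T := [seq (x.1, y :: x.2) | x <- c].

Lemma pairing_cone (T : eqType) (y : T) c g : pairing (cone y c) g = pairing c (fun s => g (y :: s)).
Proof. by rewrite /pairing big_map. Qed.

Lemma pairing_bd_cone (T : eqType) (y : T) c g :
  pairing (bd (cone y c)) g = pairing c g - pairing (bd c) (fun u => g (y :: u)).
Proof.
rewrite pairing_bd pairing_cone pairing_bd -pairingB.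
by apply: pairing_ext => s; rewrite bdg_cons.
Qed.

Lemma in_cx_all (T : eqType) (S : pred (seq T)) p c :
  all (fun x => (size x.2 == p.+1) && S x.2) c -> in_cx S p c.
Proof.
move=> H t Ht; case: (boolP (has (fun x => x.2 == t) c)) => [/hasP[x xc /eqP <-]|hn].
  by have /andP[/eqP -> ->] := allP H x xc.
by move: Ht; rewrite /coef big_hasC // eqxx.
Qed.

Lemma in_cx_norm (T : eqType) (S : pred (seq T)) p c : in_cx S p c ->
  exists c', (forall g, pairing c g = pairing c' g) /\
             all (fun x => (size x.2 == p.+1) && S x.2) c'.
Proof.
move=> H; exists [seq (coef c t, t) | t <- undup (map snd c) & coef c t != 0]; split.
  move=> g; rewrite (@pairing_support _ c g (undup (map snd c)) (undup_uniq _)); last by move=> y; rewrite mem_undup.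
  rewrite /pairing big_map big_filter [RHS]big_mkcond /=; apply: eq_bigr => t _.
  by case: ifP => // /negbFE /eqP ->; rewrite mul0r.
apply/allP => x /mapP[t]; rewrite mem_filter => /andP[Hc _] ->.
by have [-> St] := H t Hc; rewrite /= eqxx St.
Qed.

Definition bdt (T : eqType) (s : seq T) : chain T :=
  [seq ((-1) ^+ i, face i s) | i <- iota 0 (size s)].

Lemma pairing_bdt (T : eqType) (s : seq T) g : pairing (bdt s) g = bdg g s.
Proof. by rewrite /pairing /bdt big_map. Qed.

Lemma mem_bdt (T : eqType) (s : seq T) y : y \in bdt s ->
  exists2 i, (i < size s)%N & y.2 = face i s.
Proof. by case/mapP => i; rewrite mem_iota add0n => /andP[_ Hi] ->; exists i. Qed.

Lemma bdg_ext_face (T : eqType) (g1 g2 : seq T -> int) s :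
  (forall i, (i < size s)%N -> g1 (face i s) = g2 (face i s)) -> bdg g1 s = bdg g2 s.
Proof.
move=> H; rewrite /bdg big_seq_cond [RHS]big_seq_cond; apply: eq_bigr => i.
by rewrite mem_iota add0n => /andP[/andP[_ /H ->] _].
Qed.

Lemma lin_eq_in (T U : eqType) (F G : seq T -> chain U) c :
  (forall y, y \in c -> F y.2 = G y.2) -> lin F c = lin G c.
Proof. by move=> H; rewrite /lin; congr flatten; apply/eq_in_map => y /H ->. Qed.

Lemma pairing_bd_cat (T : eqType) (c d : chain T) g :
  pairing (bd (c ++ d)) g = pairing (bd c) g + pairing (bd d) g.
Proof. by rewrite !pairing_bd pairing_cat. Qed.

Lemma is_flag_cons (T : eqType) (le : rel T) x u :
  le x x -> is_flag le u -> all (fun y => le y x) u -> is_flag le (x :: u).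
Proof.
move=> lxx fu ax; apply/allP => y; rewrite inE => /orP[/eqP->|yu].
  rewrite /= lxx /=; apply/allP => z zu; by rewrite (allP ax z zu) orbT.
rewrite /= (allP ax y yu) /=; exact: (allP fu y yu).
Qed.

Lemma is_flag_consE (T : eqType) (le : rel T) x u :
  is_flag le (x :: u) -> is_flag le u /\ all (fun y => le x y || le y x) u.
Proof.
move=> /allP H; split.
  apply/allP => y yu; have := H y; rewrite inE yu orbT => /(_ isT) /=.
  by case/andP.
by have := H x (mem_head _ _) => /= /andP[].
Qed.

Lemma flag_max (T : eqType) (le : rel T) s : transitive le -> is_flag le s -> s != [::] ->
  exists2 m, m \in s & all (fun y => le y m) s.
Proof.
move=> tr; elim: s => [|x s IH] // fl _.
have [fs ax] := is_flag_consE fl.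
have lxx : le x x by move: fl => /allP /(_ x (mem_head _ _)) /= /andP[/orP[]].
case: (altP (s =P [::])) => [->|sn].
  by exists x; rewrite ?mem_head //= lxx.
have [m ms am] := IH fs sn.
have := allP ax m ms => /orP[lxm|lmx].
  by exists m; rewrite ?inE ?ms ?orbT //= lxm.
exists x; first exact: mem_head.
rewrite /= lxx /=; apply/allP => y ys; exact: tr (allP am y ys) lmx.
Qed.

Section ConeMap.
Variables (X Y : eqType) (b : seq X -> Y).

Fixpoint CMk (k : nat) (s : seq X) : chain Y :=
  if k is k'.+1 then (if s is [::] then [:: (1, [::])]
                      else cone (b s) (lin (CMk k') (bdt s)))
  else [:: (1, [::])].

Definition CM s := CMk (size s) s.

Lemma CM_nil : CM [::] = [:: (1, [::])].
Proof. by []. Qed.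

Lemma CM_cons x s : CM (x :: s) = cone (b (x :: s)) (lin CM (bdt (x :: s))).
Proof.
rewrite /CM /=; congr cone; apply: lin_eq_in => y /mem_bdt [i Hi ->].
by rewrite /CM size_face.
Qed.

Lemma CM_bd s g : pairing (bd (CM s)) g = bdg (fun f => pairing (CM f) g) s.
Proof.
move: {2}(size s) (erefl (size s)) => k; elim: k s g => [|k IH] [|x s] g //=.
  by rewrite bdg_nil pairing_bd pairing_cons pairing_nil bdg_nil mulr0 addr0.
move=> [Hk]; rewrite CM_cons pairing_bd_cone pairing_lin pairing_bdt.
rewrite [pairing (bd _) _]pairing_bd pairing_lin pairing_bdt.
set h := fun u => g (b (x :: s) :: u).
rewrite (@bdg_ext_face _ (fun s0 => pairing (CM s0) (bdg h)) (bdg (fun f => pairing (CM f) h))).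
  by rewrite bdgbdg subr0.
move=> i Hi; rewrite -pairing_bd IH //; by rewrite size_face //= Hk.
Qed.

Variables (P : pred (seq X)) (le : rel Y) (Qv : pred Y).
Hypotheses (Pface : forall s i, P s -> P (face i s))
  (le_refl : reflexive le) (le_tr : transitive le)
  (bmono : forall s i, P s -> (i < size s)%N -> face i s != [::] -> le (b (face i s)) (b s))
  (Qb : forall s, P s -> s != [::] -> Qv (b s)).

Definition Inv s u := [&& size u == size s, is_flag le u,
  all (fun y => le y (b s)) u & all Qv u].

Lemma CM_supp s : P s -> all (fun y => Inv s y.2) (CM s).
Proof.
move: {2}(size s) (erefl (size s)) => k; elim: k s => [|k IH] [|x s] //=.
move=> [Hk] Ps; rewrite CM_cons all_map.
apply: (@all_lin _ _ (fun u => Inv (x :: s) (b (x :: s) :: u))) => y /mem_bdt [i Hi ->].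
set f := face i (x :: s).
have Pf := Pface i Ps.
have sf : size f = k by rewrite /f size_face //= Hk.
have := IH f sf Pf; apply: sub_all => z /andP[/eqP sz /and3P[fz lz qz]] /=.
have lz' : all (fun y => le y (b (x :: s))) z.2.
  case: (altP (f =P [::])) => [f0|fn].
    by move: sz; rewrite f0 /=; case: z.2 {fz lz qz}.
  apply/allP => w wz; apply: le_tr (allP lz w wz) _; exact: bmono.
rewrite /Inv /= sz sf Hk eqxx /= le_refl /= lz' Qb //= qz andbT.
exact: is_flag_cons.
Qed.

End ConeMap.

Section Carrier.
Variables (X Y : eqType) (S : pred (seq X)) (S' : pred (seq Y)).
Variables (C : seq X -> pred Y) (a : seq X -> Y) (phi chi : seq X -> chain Y).
Hypotheses (SF : forall s i, S s -> S (face i s))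
  (phi_bd : forall s g, S s -> pairing (bd (phi s)) g = bdg (fun f => pairing (phi f) g) s)
  (chi_bd : forall s g, S s -> pairing (bd (chi s)) g = bdg (fun f => pairing (chi f) g) s)
  (nil_eq : forall g, pairing (phi [::]) g = pairing (chi [::]) g)
  (phi_supp : forall s, S s -> s != [::] ->
      all (fun y => (size y.2 == size s) && S' y.2 && all (C s) y.2) (phi s))
  (chi_supp : forall s, S s -> s != [::] ->
      all (fun y => (size y.2 == size s) && S' y.2 && all (C s) y.2) (chi s))
  (apex : forall s, S s -> s != [::] -> a s \in C s)
  (cone_ok : forall s u, S s -> s != [::] -> S' u -> all (C s) u -> S' (a s :: u))
  (Cmono : forall s i, S s -> (i < size s)%N -> face i s != [::] ->
      {subset C (face i s) <= C s}).

Fixpoint Dk (k : nat) (s : seq X) : chain Y :=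
  if k is k'.+1 then (if s is [::] then [::]
     else cone (a s) (phi s ++ chain_opp (chi s) ++ chain_opp (lin (Dk k') (bdt s))))
  else [::].

Definition D s := Dk (size s) s.

Lemma D_cons x s : D (x :: s) =
  cone (a (x :: s)) (phi (x :: s) ++ chain_opp (chi (x :: s)) ++ chain_opp (lin D (bdt (x :: s)))).
Proof.
rewrite /D /=; congr cone; congr (_ ++ _ ++ chain_opp _); apply: lin_eq_in => y /mem_bdt [i Hi ->].
by rewrite /D size_face.
Qed.

Lemma D_bd s g : S s -> pairing (bd (D s)) g =
  pairing (phi s) g - pairing (chi s) g - bdg (fun f => pairing (D f) g) s.
Proof.
move: {2}(size s) (erefl (size s)) => k; elim: k s g => [|k IH] [|x s] g //=.
  by move=> _ _; rewrite /D /= pairing_nil bdg_nil nil_eq subrr subr0.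
move=> [Hk] Ss; rewrite D_cons pairing_bd_cone.
set h := fun u => g (a (x :: s) :: u).
rewrite [pairing (bd _) h]pairing_bd !pairing_cat !pairing_opp pairing_lin pairing_bdt.
rewrite -(pairing_bd (phi (x :: s)) h) -(pairing_bd (chi (x :: s)) h) phi_bd // chi_bd //.
rewrite pairing_lin pairing_bdt.
rewrite (@bdg_ext_face _ (fun f => pairing (D f) (bdg h)) (fun f => pairing (phi f) h - pairing (chi f) h
             - bdg (fun f' => pairing (D f') h) f)); last first.
  move=> i Hi; rewrite -(pairing_bd (D (face i (x :: s))) h) IH //; last exact: SF.
  by rewrite size_face //= Hk.
rewrite !bdgB bdgbdg subr0.
ring.
Qed.

Lemma D_supp s : S s -> s != [::] ->
  all (fun y => (size y.2 == (size s).+1) && S' y.2 && all (C s) y.2) (D s).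
Proof.
move: {2}(size s) (erefl (size s)) => k; elim: k s => [|k IH] [|x s] //=.
move=> [Hk] Ss _; rewrite D_cons all_map.
have key : all (fun y => (size y.2 == (size (x :: s))) && S' y.2 && all (C (x :: s)) y.2)
   (phi (x :: s) ++ chain_opp (chi (x :: s)) ++ chain_opp (lin D (bdt (x :: s)))).
  rewrite !all_cat phi_supp //= /chain_opp !all_map.
  have -> := chi_supp Ss isT; rewrite /=.
  apply: (@all_lin _ _ (fun u => (size u == size (x :: s)) && S' u && all (C (x :: s)) u))
    => y /mem_bdt [i Hi ->].
  set f := face i (x :: s).
  case: (altP (f =P [::])) => [->|fn]; first by rewrite /D.
  have sf : size f = k by rewrite /f size_face //= Hk.
  have := IH f sf (SF i Ss) fn; apply: sub_all => z /andP[/andP[/eqP sz S'z] Cz] /=.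
  rewrite sz sf Hk eqxx S'z /=; apply/allP => w wz; apply: (Cmono Ss Hi fn).
  exact: allP Cz w wz.
apply: sub_all key => y /andP[/andP[/eqP sz S'y] Cy] /=.
rewrite sz eqxx /= cone_ok //= Cy andbT; exact: (apex Ss).
Qed.

Lemma D_cycle (c : chain X) g : all (fun x => S x.2) c -> (forall h, pairing (bd c) h = 0) ->
  pairing (lin phi c) g - pairing (lin chi c) g = pairing (bd (lin D c)) g.
Proof.
move=> Sc cyc; rewrite (pairing_bd (lin D c) g) (pairing_lin D c (bdg g)).
rewrite (@pairing_ext_in _ c (fun s => pairing (D s) (bdg g)) (fun s => pairing (phi s) g - pairing (chi s) g
     - bdg (fun f => pairing (D f) g) s)); last first.
  by move=> y yc; rewrite -(pairing_bd (D y.2) g) D_bd //; exact: allP Sc y yc.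
rewrite !pairingB -(pairing_bd c (fun f => pairing (D f) g)) cyc subr0 !pairing_lin //.
Qed.

End Carrier.

Lemma is_flag_sub (T : eqType) (le : rel T) s s' :
  {subset s' <= s} -> is_flag le s -> is_flag le s'.
Proof.
move=> sub /allP H; apply/allP => x xs; apply/allP => y ys.
exact: (allP (H x (sub x xs)) y (sub y ys)).
Qed.

Lemma is_flag_map (T U : eqType) (le : rel T) (le' : rel U) (f : T -> U) s :
  (forall x y, le x y -> le' (f x) (f y)) -> is_flag le s -> is_flag le' (map f s).
Proof.
move=> H /allP fl; apply/allP => _ /mapP[x xs ->]; apply/allP => _ /mapP[y ys ->].
by have /allP /(_ y ys) /orP[/H->|/H->] := fl x xs; rewrite ?orbT.
Qed.

Lemma pt_bd (X Y : eqType) (f : X -> Y) s g :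
  pairing (bd [:: (1, map f s)]) g = bdg (fun u => pairing [:: (1, map f u)] g) s.
Proof.
rewrite pairing_bd pairing_cons pairing_nil addr0 mul1r bdg_map.
by apply: bdg_ext => u; rewrite pairing_cons pairing_nil addr0 mul1r.
Qed.

Lemma chain_eq_in_cx (T : eqType) (S : pred (seq T)) p c d :
  chain_eq c d -> in_cx S p c -> in_cx S p d.
Proof. by move=> E H t; rewrite -E; apply: H. Qed.

Section App1.
Variables (A : idomainType) (M : lmodType A) (V : vectType {fraction A}).
Variables (iota : M -> V) (n : nat) (v : 'I_n -> M).
Hypotheses (TF : torsion_free M) (FT : is_frac_tensor iota)
  (Hdim : \dim (fullv : {vspace V}) = n) (Hn : (2 <= n)%N) (Hv : forall i, v i != 0).

Lemma iota_nz m : m != 0 -> iota m != 0.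
Proof.
move=> mn; apply/eqP => /eqP im; case: FT => _ _ _ /(_ m) [H _].
have [a [an am]] := H (eqP im); case: (TF am) => h; first by rewrite h eqxx in an.
by rewrite h eqxx in mn.
Qed.

Lemma rank_le (t t' : seq M) : {subset t <= t'} -> (rank iota t <= rank iota t')%N.
Proof.
move=> sub; apply: dimvS; apply: sub_span => x /mapP[m mt ->].
by apply: map_f; apply: sub.
Qed.

Lemma rank_ltn (t : seq M) (U : {set 'I_n}) : U != setT ->
  (forall m, m \in t -> exists2 i, i \in U & m = v i) -> (rank iota t < n)%N.
Proof.
move=> UT H; apply: (@leq_ltn_trans (\dim <<[seq iota (v i) | i in U]>>%VS)).
  apply: dimvS; apply: sub_span => x /mapP[m /H [i iU ->] ->].
  by apply/mapP; exists i; rewrite ?mem_enum.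
apply: leq_ltn_trans (dim_span _) _; rewrite size_map -cardE.
have := proper_card (A := U) (B := setT); rewrite properT cardsT card_ord.
by move/(_ UT).
Qed.

Lemma span_proper (t : seq M) : (rank iota t < n)%N -> <<map iota t>>%VS != fullv.
Proof.
by move=> H; apply/eqP => E; move: H; rewrite /rank E Hdim ltnn.
Qed.

Lemma span_nz (t : seq M) m : m \in t -> m != 0 -> <<map iota t>>%VS != 0%VS.
Proof.
move=> mt mn; apply/eqP => E.
have : iota m \in <<map iota t>>%VS by apply: memv_span; apply: map_f.
by rewrite E memv0; apply/negP; apply: iota_nz.
Qed.

Lemma Estar_face t i : Estar_cx iota n t -> Estar_cx iota n (face i t).
Proof.
case/andP => H1 H2; apply/andP; split.
  by apply/allP => m /mem_face mt; apply: (allP H1).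
apply: leq_ltn_trans H2; apply: rank_le => m; exact: mem_face.
Qed.

Definition Theta := CM (fun t : seq M => <<map iota t>>%VS).

Lemma Theta_supp t : Estar_cx iota n t ->
  all (fun y => [&& size y.2 == size t, tits_cx y.2 & all (fun U => U <= <<map iota t>>)%VS y.2]) (Theta t).
Proof.
move=> Et.
have BM : forall s i, Estar_cx iota n s -> (i < size s)%N -> face i s != [::] ->
    (<<map iota (face i s)>> <= <<map iota s>>)%VS.
  move=> s i _ _ _; apply: sub_span => x /mapP[m /mem_face ms ->]; exact: map_f.
have QB : forall s, Estar_cx iota n s -> s != [::] -> tits_vertex <<map iota s>>%VS.
  move=> s /andP[H1 H2] sn; rewrite /tits_vertex span_proper // andbT.
  by case: s sn H1 {H2} => // m s _ /= /andP[mn _]; apply: (span_nz (mem_head _ _) mn).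
have := @CM_supp _ _ (fun t : seq M => <<map iota t>>%VS) (Estar_cx iota n)
  (fun U W => (U <= W)%VS) (@tits_vertex _ V) (fun s i H => Estar_face i H)
  (@subvv _ _) (@subv_trans _ _) BM QB t Et.
apply: sub_all => y /and4P[s1 s2 s3 s4].
by rewrite s1 /tits_cx s4 s2 s3.
Qed.

End App1.

Section App2.
Variable n : nat.
Hypothesis Hn : (2 <= n)%N.

Definition setof (t : seq nat) : {set 'I_n} := [set i : 'I_n | val i \in t].
Definition sdD := CM setof.
Definition w0 := sdD (iota 0 n).

Lemma Delta_face t i : Delta_cx n t -> Delta_cx n (face i t).
Proof. by move=> H; apply/allP => j /mem_face jt; apply: (allP H). Qed.

Lemma sdD_supp t : Delta_cx n t ->
  all (fun y => Inv setof (fun I J : {set 'I_n} => I \subset J) (fun I => I != set0) t y.2) (sdD t).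
Proof.
apply: CM_supp.
- by move=> s i H; apply: Delta_face.
- exact: subxx.
- by move=> x y z; apply: subset_trans.
- move=> s i _ _ _; apply/subsetP => j; rewrite !inE; exact: mem_face.
- case=> // j s /= /andP[jn _] _; apply/set0Pn; exists (Ordinal jn).
  by rewrite inE mem_head.
Qed.

Lemma pick_idx_in (I : {set 'I_n}) : I != set0 -> exists2 j, j \in I & pick_idx I = val j.
Proof.
case/set0Pn => j jI; rewrite /pick_idx.
have : j \in enum I by rewrite mem_enum.
case E: (enum I) => [|k r] //= _; exists k => //.
  by rewrite -mem_enum E mem_head.
by rewrite /image_mem E.
Qed.

Lemma face_iota_notin i : (i < n)%N -> i \notin face i (iota 0 n).
Proof.
move=> Hi; rewrite /face take_iota drop_iota mem_cat !mem_iota /=.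
rewrite (minn_idPl (ltnW Hi)) !add0n; apply/negP => /orP[]; lia.
Qed.

Lemma size_iota_face i : (i < n)%N -> size (face i (iota 0 n)) = n.-1.
Proof. by move=> Hi; rewrite size_face ?size_iota. Qed.

Definition phiD (t : seq nat) : chain nat := push (@pick_idx n) (sdD t).
Definition chiD (t : seq nat) : chain nat := [:: (1, t)].
Definition aD (t : seq nat) : nat := head 0%N t.
Definition CD (t : seq nat) : pred nat := fun j => j \in t.

Lemma phiD_bd s g : Delta_cx n s ->
  pairing (bd (phiD s)) g = bdg (fun f => pairing (phiD f) g) s.
Proof.
move=> _; rewrite pairing_bd /phiD pairing_push.
rewrite (pairing_ext _ (fun u => bdg_map _ g u)) -pairing_bd CM_bd.
by apply: bdg_ext => u; rewrite pairing_push.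
Qed.

Lemma chiD_bd s g : Delta_cx n s ->
  pairing (bd (chiD s)) g = bdg (fun f => pairing (chiD f) g) s.
Proof.
move=> _; rewrite pairing_bd /chiD pairing_cons pairing_nil addr0 mul1r.
by apply: bdg_ext => u; rewrite pairing_cons pairing_nil addr0 mul1r.
Qed.

Lemma phiD_supp s : Delta_cx n s -> s != [::] ->
  all (fun y => (size y.2 == size s) && Delta_cx n y.2 && all (CD s) y.2) (phiD s).
Proof.
move=> Ds _; rewrite /phiD all_map; apply: sub_all (sdD_supp Ds) => y.
case/and4P => /eqP sz _ le qz /=; rewrite size_map sz eqxx /=.
have H : forall I, I \in y.2 -> (pick_idx I < n)%N && (pick_idx I \in s).
  move=> I Iy; have [j jI ->] := pick_idx_in (allP qz I Iy).
  rewrite ltn_ord /=; have := subsetP (allP le I Iy) j jI; by rewrite inE.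
apply/andP; split; apply/allP => _ /mapP[I Iy ->]; by case/andP: (H I Iy).
Qed.

Lemma chiD_supp s : Delta_cx n s -> s != [::] ->
  all (fun y => (size y.2 == size s) && Delta_cx n y.2 && all (CD s) y.2) (chiD s).
Proof. by move=> Ds _; rewrite /= eqxx Ds andbT /=; apply/allP => j. Qed.

Lemma aD_apex s : Delta_cx n s -> s != [::] -> aD s \in CD s.
Proof. by case: s => // x s _ _; rewrite /CD /aD mem_head. Qed.

Lemma aD_cone s u : Delta_cx n s -> s != [::] -> Delta_cx n u -> all (CD s) u ->
  Delta_cx n (aD s :: u).
Proof. by case: s => // x s /andP[xn _] _ Du _ /=; rewrite xn Du. Qed.

Lemma CD_mono s i : Delta_cx n s -> (i < size s)%N -> face i s != [::] ->
  {subset CD (face i s) <= CD s}.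
Proof. by move=> _ _ _ j; rewrite /CD; exact: mem_face. Qed.

Lemma zeta_w0 : zeta_rep w0.
Proof.
have n1 : n.-1.+1 = n by rewrite prednK // ltnW.
have n2 : n.-2.+1 = n.-1 by case: n Hn => [|[|k]].
have Dn : Delta_cx n (iota 0 n) by apply/allP => j; rewrite mem_iota.
have nn : iota 0 n != [::] by case: n Hn.
split.
- apply: in_cx_all; apply: sub_all (sdD_supp Dn) => y /and4P[/eqP sz fl _ qz].
  by rewrite sz size_iota n1 eqxx /sdDelta_cx qz fl.
- apply: (@chain_eq_in_cx _ _ _ (lin sdD (bdt (iota 0 n)))).
    apply/chain_eqP => g; rewrite pairing_lin pairing_bdt CM_bd //.
  apply: in_cx_all. apply: (@all_lin _ _ (fun u => (size u == n.-2.+1) && @Sigma_cx n u))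
    => y /mem_bdt [i]; rewrite size_iota => Hi ->.
  have Df := Delta_face i Dn.
  apply: sub_all (sdD_supp Df) => z /and4P[/eqP sz fl le qz].
  rewrite sz size_iota_face // n2 eqxx /Sigma_cx fl andbT.
  apply/allP => I Iz; rewrite (allP qz I Iz) /=.
  apply/negP => /eqP IT; have := allP le I Iz; rewrite IT => /subsetP /(_ (Ordinal Hi)).
  by rewrite !inE /= (negbTE (face_iota_notin Hi)) => /(_ isT).
set Dd := D aD phiD chiD.
have SF : forall s i, Delta_cx n s -> Delta_cx n (face i s) by move=> s i; apply: Delta_face.
exists (lin Dd (bdt (iota 0 n))), (Dd (iota 0 n)); split.
- apply: in_cx_all; apply: (@all_lin _ _ (fun u => (size u == n.-1.+1) && bDelta_cx n u))
    => y /mem_bdt [i]; rewrite size_iota => Hi ->.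
  have Df := Delta_face i Dn.
  have fn : face i (iota 0 n) != [::].
    by apply/eqP => E; move: (size_iota_face Hi); rewrite E /=; case: n Hn => [|[|k]].
  have := D_supp SF phiD_supp chiD_supp aD_apex aD_cone CD_mono Df fn.
  apply: sub_all => z /andP[/andP[/eqP sz Dz] Cz].
  rewrite sz size_iota_face // n1 eqxx /=; apply/andP; split; first exact: Dz.
  apply/negP => /allP /(_ i); rewrite mem_iota /= add0n Hi => /(_ isT) iz.
  by have := allP Cz i iz; rewrite /CD (negbTE (face_iota_notin Hi)).
- apply: in_cx_all.
  have := D_supp SF phiD_supp chiD_supp aD_apex aD_cone CD_mono Dn nn.
  by apply: sub_all => z /andP[/andP[/eqP sz ->] _]; rewrite sz size_iota eqxx.
apply/chain_eqP => g.
rewrite pairing_sub pairing_cat (D_bd aD SF phiD_bd chiD_bd) //.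
rewrite pairing_lin pairing_bdt /phiD /chiD /w0 /simplex_chain.
ring.
Qed.

End App2.

Lemma pick_vertex_in (A : idomainType) (M : lmodType A) (Y : {fset M}) :
  Y != fset0%fset -> pick_vertex Y \in Y.
Proof.
case/fset0Pn => x xY; rewrite /pick_vertex.
have : x \in enum_fset Y by [].
case E: (enum_fset Y) => [|y r] //= _.
by rewrite -[y \in Y]/(y \in enum_fset Y) E mem_head.
Qed.

Lemma Sigma_face n (s : seq {set 'I_n}) i : Sigma_cx s -> Sigma_cx (face i s).
Proof.
case/andP => H1 H2; apply/andP; split.
  by apply/allP => I /mem_face Is; apply: (allP H1).
by apply: is_flag_sub H2 => I; apply: mem_face.
Qed.

Section App3.
Variables (A : idomainType) (M : lmodType A) (V : vectType {fraction A}).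
Variables (iota : M -> V) (n : nat) (v : 'I_n -> M).
Hypotheses (TF : torsion_free M) (FT : is_frac_tensor iota)
  (Hdim : \dim (fullv : {vspace V}) = n) (Hn : (2 <= n)%N) (Hv : forall i, v i != 0).

Definition psi (I : {set 'I_n}) : {fset M} := [fset v i | i in I]%fset.
Definition vn (k : nat) : M := if insub k is Some i then v i else 0.
Definition Uof (s : seq {set 'I_n}) : {set 'I_n} := [set i : 'I_n | has (fun I : {set 'I_n} => i \in I) s].
Definition CW (s : seq {set 'I_n}) : pred M := fun m => [exists i in Uof s, m == v i].
Definition aW (s : seq {set 'I_n}) : M := vn (pick_idx (Uof s)).
Definition phiW (s : seq {set 'I_n}) : chain M := [:: (1, map (fun I => pick_vertex (psi I)) s)].
Definition chiW (s : seq {set 'I_n}) : chain M := [:: (1, map (fun I => vn (pick_idx I)) s)].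

Lemma vn_val (j : 'I_n) : vn (val j) = v j.
Proof. by rewrite /vn valK. Qed.

Lemma psiP m I : m \in psi I -> exists2 j, j \in I & m = v j.
Proof. by move/imfsetP. Qed.

Lemma psiI (j : 'I_n) (I : {set 'I_n}) : j \in I -> v j \in psi I.
Proof. by move=> h; apply/imfsetP; exists j. Qed.

Lemma psi_nz I : I != set0 -> psi I != fset0%fset.
Proof. by case/set0Pn => j jI; apply/fset0Pn; exists (v j); apply: psiI. Qed.

Lemma CW_v s j : j \in Uof s -> CW s (v j).
Proof. by move=> h; apply/existsP; exists j; rewrite h eqxx. Qed.

Lemma pick_CW s I : I \in s -> I != set0 -> CW s (vn (pick_idx I)) && (vn (pick_idx I) != 0).
Proof.
move=> Is In; have [j jI ->] := pick_idx_in In; rewrite vn_val Hv andbT.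
by apply: CW_v; rewrite inE; apply/hasP; exists I.
Qed.

Lemma pickpsi_CW s I : I \in s -> I != set0 -> CW s (pick_vertex (psi I)) && (pick_vertex (psi I) != 0).
Proof.
move=> Is In; have [j jI ->] := psiP (pick_vertex_in (psi_nz In)); rewrite Hv andbT.
by apply: CW_v; rewrite inE; apply/hasP; exists I.
Qed.

Lemma Uof_proper s : Sigma_cx s -> s != [::] -> Uof s != setT.
Proof.
case/andP => H1 H2 sn.
have tr : transitive (fun I J : {set 'I_n} => I \subset J) by move=> x y z; apply: subset_trans.
have [m ms am] := flag_max tr H2 sn.
have /andP[_ mT] := allP H1 m ms; apply: contraNneq mT => E.
apply/eqP/setP => j; rewrite inE; have : j \in Uof s by rewrite E inE.
rewrite inE => /hasP[I Is jI]; exact: subsetP (allP am I Is) j jI.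
Qed.

Lemma CW_rank s u : Sigma_cx s -> s != [::] -> all (CW s) u -> (rank iota u < n)%N.
Proof.
move=> Ss sn Cu; apply: (rank_ltn iota (Uof_proper Ss sn)) => m mu.
by have /existsP[j /andP[jU /eqP ->]] := allP Cu m mu; exists j.
Qed.

Lemma Estar_psi I : I != set0 -> I != setT -> Estar_simplex iota n (psi I).
Proof.
move=> I0 IT; rewrite /Estar_simplex psi_nz //=; apply/andP; split.
  by apply/allP => m /psiP[j _ ->].
apply: (rank_ltn iota IT) => m /psiP[j jI ->]; by exists j.
Qed.

Lemma key_cx_W : forall (s : seq {set 'I_n}) i, Sigma_cx s -> Sigma_cx (face i s).
Proof. by move=> s i; apply: Sigma_face. Qed.

Lemma phiW_bd s g : Sigma_cx s -> pairing (bd (phiW s)) g = bdg (fun f => pairing (phiW f) g) s.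
Proof. by move=> _; apply: pt_bd. Qed.

Lemma chiW_bd s g : Sigma_cx s -> pairing (bd (chiW s)) g = bdg (fun f => pairing (chiW f) g) s.
Proof. by move=> _; apply: pt_bd. Qed.

Lemma phiW_supp s : Sigma_cx s -> s != [::] ->
  all (fun y => (size y.2 == size s) && Estar_cx iota n y.2 && all (CW s) y.2) (phiW s).
Proof.
move=> Ss sn; have /andP[H1 _] := Ss.
have Cu : all (CW s) (map (fun I => pick_vertex (psi I)) s).
  apply/allP => _ /mapP[I Is ->]; have /andP[I0 _] := allP H1 I Is.
  by case/andP: (pickpsi_CW Is I0).
rewrite /= size_map eqxx Cu /= !andbT /Estar_cx (CW_rank Ss sn Cu) andbT.
apply/allP => _ /mapP[I Is ->]; have /andP[I0 _] := allP H1 I Is.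
by case/andP: (pickpsi_CW Is I0).
Qed.

Lemma chiW_supp s : Sigma_cx s -> s != [::] ->
  all (fun y => (size y.2 == size s) && Estar_cx iota n y.2 && all (CW s) y.2) (chiW s).
Proof.
move=> Ss sn; have /andP[H1 _] := Ss.
have Cu : all (CW s) (map (fun I => vn (pick_idx I)) s).
  apply/allP => _ /mapP[I Is ->]; have /andP[I0 _] := allP H1 I Is.
  by case/andP: (pick_CW Is I0).
rewrite /= size_map eqxx Cu /= !andbT /Estar_cx (CW_rank Ss sn Cu) andbT.
apply/allP => _ /mapP[I Is ->]; have /andP[I0 _] := allP H1 I Is.
by case/andP: (pick_CW Is I0).
Qed.

Lemma Uof_nz s : Sigma_cx s -> s != [::] -> Uof s != set0.
Proof.
case: s => // I s /andP[/andP[/andP[I0 _] _] _] _.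
case/set0Pn: I0 => j jI; apply/set0Pn; exists j; by rewrite inE /= jI.
Qed.

Lemma aW_apex s : Sigma_cx s -> s != [::] -> aW s \in CW s.
Proof.
move=> Ss sn; have [j jU E] := pick_idx_in (Uof_nz Ss sn).
by rewrite /aW E vn_val; apply: CW_v.
Qed.

Lemma aW_cone s u : Sigma_cx s -> s != [::] -> Estar_cx iota n u -> all (CW s) u ->
  Estar_cx iota n (aW s :: u).
Proof.
move=> Ss sn /andP[H1 _] Cu; apply/andP; split.
  rewrite /= H1 andbT; have [j jU E] := pick_idx_in (Uof_nz Ss sn).
  by rewrite /aW E vn_val.
apply: (CW_rank Ss sn); rewrite /= Cu andbT; exact: aW_apex.
Qed.

Lemma CW_mono s i : Sigma_cx s -> (i < size s)%N -> face i s != [::] ->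
  {subset CW (face i s) <= CW s}.
Proof.
move=> _ _ _ m /existsP[j /andP[jU /eqP ->]]; apply: CW_v.
by move: jU; rewrite !inE => /hasP[I /mem_face Is jI]; apply/hasP; exists I.
Qed.

Lemma pairing_pt (X Y : eqType) (f : X -> Y) s g : pairing [:: (1, map f s)] g = g (map f s).
Proof. by rewrite pairing_cons pairing_nil addr0 mul1r. Qed.

Lemma Q_vn : [seq v i | i <- enum 'I_n] = map vn (seq.iota 0 n).
Proof. by rewrite -val_enum_ord -map_comp; apply: eq_map => i /=; rewrite vn_val. Qed.

Lemma bdbd_zero (T : eqType) (c : chain T) h : pairing (bd (bd c)) h = 0.
Proof. by rewrite !pairing_bd (pairing_ext _ (fun s => bdgbdg h s)) pairing0. Qed.

Lemma key_w w : zeta_rep w ->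
  ar_rep iota n [:: (1, [seq v i | i <- enum 'I_n])] (push psi (bd w)).
Proof.
case=> w1 w2 [a [b [ha hb heq]]].
have n1 : n.-1.+1 = n by rewrite prednK // ltnW.
have n2 : n.-2.+1 = n.-1 by case: n Hn => [|[|k]].
have [c' [Ec' Ac']] := in_cx_norm w2.
have [a' [Ea' Aa']] := in_cx_norm ha.
have Sc' : all (fun x => Sigma_cx x.2) c' by apply: sub_all Ac' => x /andP[].
have heqP := (chain_eqP _ _).1 heq.
have cyc' : forall h, pairing (bd c') h = 0.
  by move=> h; rewrite pairing_bd -Ec' -pairing_bd bdbd_zero.
have fl : forall I J : {set 'I_n}, I \subset J -> (psi I `<=` psi J)%fset.
  move=> I J /subsetP IJ; apply/fsubsetP => m /psiP[j jI ->]; apply: psiI; exact: IJ.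
split.
- apply: (@chain_eq_in_cx _ _ _ (push psi c')).
    by apply/chain_eqP => g; rewrite !pairing_push Ec'.
  apply: in_cx_all; rewrite all_map; apply: sub_all Ac' => x /andP[/eqP sz /andP[H1 H2]] /=.
  rewrite size_map sz eqxx /=; apply/andP; split; last exact: is_flag_map fl H2.
  by apply/allP => _ /mapP[I Is ->]; have /andP[I0 IT] := allP H1 I Is; apply: Estar_psi.
- apply/chain_eqP => g; rewrite pairing_nil pairing_bd pairing_push.
  rewrite (pairing_ext _ (fun s => bdg_map psi g s)) -pairing_bd; exact: bdbd_zero.
set Dw := D aW phiW chiW.
exists (lin Dw c' ++ push vn a'); split.
  apply: in_cx_all; rewrite all_cat; apply/andP; split.
    apply: (@all_lin _ _ (fun u => (size u == n.-2.+2) && Estar_cx iota n u)) => x xc.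
    have /andP[/eqP sz Sx] := allP Ac' x xc.
    have xn : x.2 != [::] by rewrite -size_eq0 sz.
    have := D_supp key_cx_W phiW_supp chiW_supp aW_apex aW_cone CW_mono Sx xn.
    by apply: sub_all => y /andP[/andP[/eqP -> ->] _]; rewrite sz eqxx.
  rewrite all_map; apply: sub_all Aa' => x /andP[/eqP sz /andP[H1 H2]] /=.
  have n3 : n.-2.+2 = n by rewrite n2 n1.
  rewrite size_map sz n1 n3 eqxx /=.
  have [j0 j0n j0x] : exists2 j0, (j0 < n)%N & j0 \notin x.2.
    case/allPn: H2 => j0; rewrite seq.mem_iota add0n => /andP[_ ?] ?; by exists j0.
  have vnx : forall m, m \in map vn x.2 -> exists2 i, i \in [set~ Ordinal j0n] & m = v i.
    move=> _ /mapP[j jx ->]; have jn := allP H1 j jx.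
    exists (Ordinal jn); last by rewrite -vn_val.
    rewrite !inE; apply: contraNneq j0x => /(congr1 val) /= <-; done.
  apply/andP; split.
    by apply/allP => m /vnx [i _ ->].
  apply: (rank_ltn iota _ vnx); apply/eqP => /setP /(_ (Ordinal j0n)).
  by rewrite !inE eqxx.
apply/chain_eqP => g.
rewrite pairing_bd_cat -(D_cycle aW key_cx_W phiW_bd chiW_bd (fun g => erefl) g Sc' cyc').
set G := fun u => g (map vn u).
have T1 : pairing (lin phiW c') g = pairing (push (@pick_vertex _ M) (push psi (bd w))) g.
  rewrite pairing_lin !pairing_push (pairing_ext _ (fun s => pairing_pt _ s g)) -Ec'.
  by apply: pairing_ext => s; rewrite -map_comp.
have T2 : pairing (lin chiW c') g = bdg G (seq.iota 0 n) + pairing a' (bdg G).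
  rewrite pairing_lin (pairing_ext _ (fun s => pairing_pt _ s g)) -Ec' pairing_bd.
  have -> : pairing w (bdg (fun s => g (map (fun I => vn (pick_idx I)) s)))
          = pairing (push (@pick_idx n) w) (bdg G).
    rewrite pairing_push; apply: pairing_ext => s; rewrite bdg_map /G.
    by apply: bdg_ext => u; rewrite -map_comp.
  have := heqP (bdg G); rewrite pairing_sub pairing_cat => E.
  have -> : pairing (push (@pick_idx n) w) (bdg G) =
     pairing (simplex_chain n) (bdg G) + (pairing a (bdg G) + pairing (bd b) (bdg G)).
    by rewrite -E; ring.
  rewrite Ea' /simplex_chain pairing_cons pairing_nil mul1r addr0.
  by rewrite pairing_bd (pairing_ext _ (fun s => bdgbdg G s)) pairing0 addr0.
have T3 : pairing (bd (push vn a')) g = pairing a' (bdg G).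
  by rewrite pairing_bd pairing_push; apply: pairing_ext => s; rewrite bdg_map.
have T4 : pairing (bd [:: (1, [seq v i | i <- enum 'I_n])]) g = bdg G (seq.iota 0 n).
  by rewrite Q_vn pt_bd; apply: bdg_ext => u; rewrite pairing_pt.
rewrite pairing_sub T1 T2 T3 T4; ring.
Qed.

End App3.

Section App4.
Variables (A : idomainType) (M : lmodType A) (V : vectType {fraction A}).
Variables (iota : M -> V) (n : nat) (v : 'I_n -> M).
Hypotheses (TF : torsion_free M) (FT : is_frac_tensor iota)
  (Hdim : \dim (fullv : {vspace V}) = n) (Hn : (2 <= n)%N) (Hv : forall i, v i != 0).

Definition flatY (s : seq {fset M}) : seq M := flatten (map (fun Y : {fset M} => enum_fset Y) s).
Definition Wof (s : seq {fset M}) : {vspace V} := <<map iota (flatY s)>>%VS.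
Definition CZ (s : seq {fset M}) : pred {vspace V} := fun U => tits_vertex U && (U <= Wof s)%VS.
Definition phiZ (s : seq {fset M}) : chain {vspace V} := [:: (1, map (spanY iota) s)].
Definition chiZ (s : seq {fset M}) : chain {vspace V} := Theta iota (map (@pick_vertex _ M) s).

Lemma mem_flatY (m : M) (Y : {fset M}) (s : seq {fset M}) : Y \in s -> m \in Y -> m \in flatY s.
Proof. by move=> Ys mY; apply/flatten_mapP; exists Y. Qed.

Lemma flatYP (m : M) (s : seq {fset M}) : m \in flatY s -> exists2 Y, Y \in s & m \in Y.
Proof. by case/flatten_mapP => Y Ys mY; exists Y. Qed.

Lemma sdE_face s i : sdEstar_cx iota n s -> sdEstar_cx iota n (face i s).
Proof.
case/andP => H1 H2; apply/andP; split.
  by apply/allP => I /mem_face Is; apply: (allP H1).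
by apply: is_flag_sub H2 => I; apply: mem_face.
Qed.

Lemma spanY_mono (Y Y' : {fset M}) : (Y `<=` Y')%fset -> (spanY iota Y <= spanY iota Y')%VS.
Proof.
move/fsubsetP => H; apply: sub_span => _ /mapP[m mY ->]; apply: map_f.
exact: H.
Qed.

Lemma spanY_tits Y : Estar_simplex iota n Y -> tits_vertex (spanY iota Y).
Proof.
case/andP => Y0 /andP[H1 H2]; rewrite /tits_vertex /spanY (span_proper Hdim) // andbT.
case/fset0Pn: Y0 => m mY; apply: (span_nz TF FT (t := enum_fset Y) mY).
exact: (allP H1).
Qed.

Lemma Wof_max s : sdEstar_cx iota n s -> s != [::] ->
  exists2 Y, Estar_simplex iota n Y & forall m, m \in flatY s -> m \in Y.
Proof.
case/andP => H1 H2 sn.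
have [Y Ys aY] := flag_max (@fsubset_trans _) H2 sn.
exists Y; first exact: (allP H1).
move=> m /flatYP [Y' Y's mY']; exact: (fsubsetP (allP aY Y' Y's)).
Qed.

Lemma rank_flat s t : sdEstar_cx iota n s -> s != [::] -> {subset t <= flatY s} ->
  (rank iota t < n)%N.
Proof.
move=> Ss sn sub; have [Y /andP[_ /andP[_ HY]] mY] := Wof_max Ss sn.
apply: leq_ltn_trans HY; apply: rank_le => m /sub /mY; done.
Qed.

Lemma Wof_tits s : sdEstar_cx iota n s -> s != [::] -> tits_vertex (Wof s).
Proof.
move=> Ss sn; rewrite /tits_vertex /Wof (span_proper Hdim); last exact: (rank_flat Ss sn (fun m h => h)).
case: s sn Ss => // Y s _ /andP[/andP[/andP[Y0 /andP[H1 _]] _] _].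
case/fset0Pn: Y0 => m mY; rewrite andbT; apply: (span_nz TF FT (t := flatY (Y :: s)) (m := m)).
  by apply: mem_flatY mY; apply: mem_head.
exact: (allP H1).
Qed.

Lemma pick_Estar s : sdEstar_cx iota n s -> s != [::] -> Estar_cx iota n (map (@pick_vertex _ M) s).
Proof.
move=> Ss sn; have /andP[H1 _] := Ss.
have pin : forall Y, Y \in s -> pick_vertex Y \in Y.
  by move=> Y Ys; apply: pick_vertex_in; case/andP: (allP H1 Y Ys).
apply/andP; split.
  apply/allP => _ /mapP[Y Ys ->]; have /andP[_ /andP[HY _]] := allP H1 Y Ys.
  exact: (allP HY _ (pin Y Ys)).
apply: (rank_flat Ss sn) => _ /mapP[Y Ys ->]; exact: mem_flatY (pin Y Ys).
Qed.

Lemma phiZ_bd s g : sdEstar_cx iota n s ->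
  pairing (bd (phiZ s)) g = bdg (fun f => pairing (phiZ f) g) s.
Proof. by move=> _; apply: pt_bd. Qed.

Lemma chiZ_bd s g : sdEstar_cx iota n s ->
  pairing (bd (chiZ s)) g = bdg (fun f => pairing (chiZ f) g) s.
Proof. by move=> _; rewrite /chiZ /Theta CM_bd bdg_map. Qed.

Lemma phiZ_supp s : sdEstar_cx iota n s -> s != [::] ->
  all (fun y => (size y.2 == size s) && tits_cx y.2 && all (CZ s) y.2) (phiZ s).
Proof.
move=> Ss sn; have /andP[H1 H2] := Ss.
rewrite /= size_map eqxx /= andbT /tits_cx (is_flag_map spanY_mono H2) andbT.
apply/andP; split; apply/allP => _ /mapP[Y Ys ->]; have HY := allP H1 Y Ys.
  exact: spanY_tits.
rewrite /CZ spanY_tits //; apply: sub_span => _ /mapP[m mY ->]; apply: map_f.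
exact: mem_flatY mY.
Qed.

Lemma chiZ_supp s : sdEstar_cx iota n s -> s != [::] ->
  all (fun y => (size y.2 == size s) && tits_cx y.2 && all (CZ s) y.2) (chiZ s).
Proof.
move=> Ss sn; have /andP[H1 _] := Ss.
have := Theta_supp TF FT Hdim (pick_Estar Ss sn); apply: sub_all.
move=> y /and3P[sz ty ly]; rewrite size_map in sz; rewrite sz ty /=.
apply/allP => U Uy; rewrite /CZ; have /andP[tv _] := ty.
rewrite (allP tv U Uy) /=; apply: subv_trans (allP ly U Uy) _.
apply: sub_span => _ /mapP[x /mapP[Y Ys ->] ->]; apply: map_f.
have /andP[Y0 _] := allP H1 Y Ys; apply: mem_flatY Ys _; exact: pick_vertex_in.
Qed.

Lemma aZ_apex s : sdEstar_cx iota n s -> s != [::] -> Wof s \in CZ s.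
Proof. by move=> Ss sn; rewrite /CZ unfold_in /= Wof_tits // subvv. Qed.

Lemma aZ_cone s u : sdEstar_cx iota n s -> s != [::] -> tits_cx u -> all (CZ s) u ->
  tits_cx (Wof s :: u).
Proof.
move=> Ss sn /andP[t1 t2] Cu; rewrite /tits_cx /= Wof_tits // t1 /=.
apply: is_flag_cons; [exact: subvv| exact: t2|].
by apply/allP => U Uu; case/andP: (allP Cu U Uu).
Qed.

Lemma CZ_mono s i : sdEstar_cx iota n s -> (i < size s)%N -> face i s != [::] ->
  {subset CZ (face i s) <= CZ s}.
Proof.
move=> _ _ _ U /andP[tU lU]; rewrite /CZ unfold_in /= tU /=; apply: subv_trans lU _.
apply: sub_span => _ /mapP[m /flatYP[Y /mem_face Ys mY] ->]; apply: map_f.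
exact: mem_flatY mY.
Qed.

Lemma key_cx_Z : forall s i, sdEstar_cx iota n s -> sdEstar_cx iota n (face i s).
Proof. by move=> s i; apply: sdE_face. Qed.

Lemma key_z z : ar_rep iota n [:: (1, [seq v i | i <- enum 'I_n])] z ->
  exists d, all (fun x => (size x.2 == n.-2.+2) && tits_cx x.2) d /\
   forall g, pairing (bd d) g = pairing (push (spanY iota) z) g
      - pairing (lin (Theta iota) (bd [:: (1, [seq v i | i <- enum 'I_n])])) g.
Proof.
case=> z1 z2 [d0 [hd0 ed0]].
have n1 : n.-1.+1 = n by rewrite prednK // ltnW.
have n2 : n.-2.+1 = n.-1 by case: n Hn => [|[|k]].
have [c' [Ec' Ac']] := in_cx_norm z1.
have [d' [Ed' Ad']] := in_cx_norm hd0.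
have Sc' : all (fun x => sdEstar_cx iota n x.2) c' by apply: sub_all Ac' => x /andP[].
have cyc' : forall h, pairing (bd c') h = 0.
  move=> h; rewrite pairing_bd -Ec' -pairing_bd.
  by have := (chain_eqP _ _).1 z2 h; rewrite pairing_nil.
set Dz := D Wof phiZ chiZ.
exists (lin Dz c' ++ lin (Theta iota) d'); split.
  rewrite all_cat; apply/andP; split.
    apply: (@all_lin _ _ (fun u => (size u == n.-2.+2) && tits_cx u)) => x xc.
    have /andP[/eqP sz Sx] := allP Ac' x xc.
    have xn : x.2 != [::] by rewrite -size_eq0 sz.
    have := D_supp key_cx_Z phiZ_supp chiZ_supp aZ_apex aZ_cone CZ_mono Sx xn.
    by apply: sub_all => y /andP[/andP[/eqP -> ->] _]; rewrite sz eqxx.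
  apply: (@all_lin _ _ (fun u => (size u == n.-2.+2) && tits_cx u)) => x xd.
  have /andP[/eqP sz Ex] := allP Ad' x xd.
  have := Theta_supp TF FT Hdim Ex; apply: sub_all => y /and3P[/eqP -> -> _].
  by rewrite sz eqxx.
move=> g; rewrite pairing_bd_cat -(D_cycle Wof key_cx_Z phiZ_bd chiZ_bd (fun g => erefl) g Sc' cyc').
have ed := (chain_eqP _ _).1 ed0.
set G := fun t => pairing (Theta iota t) g.
have T1 : pairing (lin phiZ c') g = pairing (push (spanY iota) z) g.
  rewrite pairing_lin (pairing_ext _ (fun s => pairing_pt _ s g)) -Ec'.
  by rewrite pairing_push.
have T2 : pairing (lin chiZ c') g =
   pairing (lin (Theta iota) (bd [:: (1, [seq v i | i <- enum 'I_n])])) g + pairing d' (bdg G).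
  rewrite pairing_lin -Ec' -[LHS]/(pairing z (fun s => G (map (@pick_vertex _ M) s))).
  rewrite -pairing_push.
  have := ed G; rewrite pairing_sub => E.
  have -> : pairing (push (@pick_vertex _ M) z) G =
     pairing (bd [:: (1, [seq v i | i <- enum 'I_n])]) G + pairing (bd d0) G by rewrite E; ring.
  by rewrite pairing_lin (pairing_bd d0 G) Ed'.
have T3 : pairing (bd (lin (Theta iota) d')) g = pairing d' (bdg G).
  rewrite pairing_bd pairing_lin; apply: pairing_ext => s.
  by rewrite -pairing_bd /Theta CM_bd.
rewrite T1 T2 T3; ring.
Qed.

End App4.

Lemma spanY_psi (A : idomainType) (M : lmodType A) (V : vectType {fraction A})
  (iota : M -> V) (n : nat) (v : 'I_n -> M) (I : {set 'I_n}) :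
  spanY iota (psi v I) = phiQ iota v I.
Proof.
apply: eq_span => x; apply/mapP/mapP => [[m mp ->]|[i iI ->]].
  have [j jI ->] := psiP (mp : m \in psi v I); by exists j; rewrite ?mem_enum.
by exists (v i) => //; apply: (psiI v (I := I)); rewrite -mem_enum.
Qed.

Unset Implicit Arguments.

Theorem theorem6p1 (A : idomainType) (M : lmodType A)
    (V : vectType {fraction A}) (iota : M -> V) (n : nat) (v : 'I_n -> M) :
  noetherian A -> fin_gen M -> torsion_free M -> is_frac_tensor iota ->
  \dim (fullv : {vspace V}) = n -> (2 <= n)%N ->
  (forall i, v i != 0) ->
  <<[seq iota (v i) | i <- enum 'I_n]>>%VS = fullv ->
  let Q : chain M := [:: (1%:Z, [seq v i | i <- enum 'I_n])] in
  [/\ exists z, ar_rep iota n Q z,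
      exists w, @zeta_rep n w &
      forall z w, ar_rep iota n Q z -> @zeta_rep n w ->
        homologous (tits_cx (V := V)) n.-2
          (push (spanY iota) z) (push (phiQ iota v) (bd w))].
Proof.
move=> _ _ TF FT Hdim Hn Hv _ Q.
split.
- by exists (push (psi v) (bd (w0 n))); apply: (key_w iota Hn Hv (zeta_w0 Hn)).
- by exists (w0 n); apply: zeta_w0.
move=> z w hz hw.
have [d1 [A1 E1]] := key_z TF FT Hdim Hn hz.
have [d2 [A2 E2]] := key_z TF FT Hdim Hn (key_w iota Hn Hv hw).
exists (d1 ++ chain_opp d2); split.
  apply: in_cx_all; rewrite all_cat A1 /chain_opp all_map /=.
  by apply: sub_all A2 => x.
apply/chain_eqP => g; rewrite pairing_bd pairing_cat pairing_opp -!pairing_bd E1 E2.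
rewrite pairing_sub !pairing_push.
have -> : pairing (bd w) (fun s => g [seq spanY iota i | i <- [seq psi v i | i <- s]])
   = pairing (bd w) (fun s => g [seq phiQ iota v i | i <- s]).
  by apply: pairing_ext => s; rewrite -map_comp; congr g; apply: eq_map => I /=; rewrite spanY_psi.
ring.
Qed.
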